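(* There exist natural numbers $B_0,B_1,B_2,\dots$ such that for every finite set $\Omega$, every algebra $\Sigma$ of subsets of $\Omega$, and every function $\upsilon:\Sigma\to\mathbb{R}$, there exists a set $\mathcal{P}$ of probability measures on $\Sigma$ with $\upsilon(X)=\sup\{\mu(X):\mu\in\mathcal{P}\}$ for all $X\in\Sigma$ if and only if $\upsilon$ satisfies: (UPF1) $\upsilon(\emptyset)=0$; (UPF2) $\upsilon(\Omega)=1$; (UPF3) for all natural numbers $m,n,k\le B_{|\Omega|}$ and all $A,A_1,\dots,A_m\in\Sigma$, if the multiset $\{\!\{A_1,\dots,A_m\}\!\}$ is an $(n,k)$-cover of $(A,\Omega)$, then $k+n\,\upsilon(A)\le\sum_{i=1}^m\upsilon(A_i)$.
   Context: A probability measure on an algebra $\Sigma$ of subsets of $\Omega$ is a finitely additive $\mu:\Sigma\to[0,1]$ with $\mu(\emptyset)=0,\mu(\Omega)=1$. A multiset $\{\!\{A_1,\dots,A_m\}\!\}$ of subsets (not necessarily distinct) covers a set $X$ $n$ times if every $x\in X$ belongs to $A_i$ for at least $n$ distinct indices $i\in\{1,\dots,m\}$. It is an $(n,k)$-cover of $(A,\Omega)$ if it covers $\Omega$ $k$ times and covers $A$ $n+k$ times. *)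

(* Defs.v *)
From HB Require Import structures.
From mathcomp Require Import all_boot all_order all_algebra.
From mathcomp Require Import Rstruct.
From Stdlib Require Rdefinitions.
Notation R := Rdefinitions.R.
Set Implicit Arguments. Unset Strict Implicit. Unset Printing Implicit Defensive.
Import Order.TTheory GRing.Theory Num.Theory.
Local Open Scope ring_scope.

Definition is_algebra (T : finType) (Sig : {set {set T}}) : Prop :=
  [/\ set0 \in Sig,
      (forall A, A \in Sig -> ~: A \in Sig) &
      (forall A B, A \in Sig -> B \in Sig -> A :|: B \in Sig)].

(* finitely additive probability measure on Sig (values outside Sig ignored) *)
Definition prob_measure (T : finType) (Sig : {set {set T}}) (mu : {set T} -> R)
  : Prop :=
  [/\ (forall A, A \in Sig -> 0 <= mu A <= 1),
      mu set0 = 0, mu [set: T] = 1 &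
      (forall A B, A \in Sig -> B \in Sig -> [disjoint A & B] ->
         mu (A :|: B) = mu A + mu B)].

Definition is_sup_of (T : finType) (P : ({set T} -> R) -> Prop) (X : {set T})
  (s : R) : Prop :=
  (forall mu, P mu -> mu X <= s) /\
  (forall b : R, (forall mu, P mu -> mu X <= b) -> s <= b).

Definition covers_times (T : finType) (m : nat) (As : 'I_m -> {set T})
  (X : {set T}) (n : nat) : Prop :=
  forall x, x \in X -> (n <= #|[set i : 'I_m | x \in As i]|)%N.

Definition nk_cover (T : finType) (m : nat) (As : 'I_m -> {set T})
  (n k : nat) (A : {set T}) : Prop :=
  covers_times As [set: T] k /\ covers_times As A (n + k).

Definition UPF (T : finType) (Sig : {set {set T}}) (ups : {set T} -> R)
  (B : nat -> nat) : Prop :=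
  [/\ ups set0 = 0, ups [set: T] = 1 &
      forall (m n k : nat), (m <= B #|T|)%N -> (n <= B #|T|)%N -> (k <= B #|T|)%N ->
      forall (A : {set T}) (As : 'I_m -> {set T}),
        A \in Sig -> (forall i, As i \in Sig) ->
        nk_cover As n k A ->
        k%:R + n%:R * ups A <= \sum_(i < m) ups (As i)].

(* Main.v *)
Require Import Defs.
From HB Require Import structures.
From mathcomp Require Import all_boot all_order all_algebra.
From mathcomp Require Import Rstruct.
From mathcomp Require Import ring lra zify.
From Stdlib Require Import Classical.
Set Implicit Arguments. Unset Strict Implicit. Unset Printing Implicit Defensive.
Import Order.TTheory GRing.Theory Num.Theory.
Local Open Scope ring_scope.
Section FM.
Variables (F : realFieldType) (I V : finType) (a : I -> V -> int) (b : I -> F).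

Definition frow (c : {ffun I -> nat}) (v : V) : int := \sum_i (c i)%:Z * a i v.
Definition rhs (c : {ffun I -> nat}) : F := \sum_i (c i)%:R * b i.
Definition lhs (y : V -> F) c : F := \sum_v (frow c v)%:~R * y v.
Definition sat (y : V -> F) c := lhs y c <= rhs c.
Definition comb j (p n : {ffun I -> nat}) : {ffun I -> nat} :=
  [ffun i => (`|frow n j| * p i + `|frow p j| * n i)%N].
Definition fmelim j (L : seq {ffun I -> nat}) :=
  [seq c <- L | frow c j == 0] ++
  [seq comb j p n | p <- [seq c <- L | 0 < frow c j], n <- [seq c <- L | frow c j < 0]].

Lemma row_comb j p n v : frow (comb j p n) v =
  (`|frow n j|%N)%:Z * frow p v + (`|frow p j|%N)%:Z * frow n v.
Proof.
rewrite /frow !mulr_sumr -big_split /=; apply: eq_bigr => i _.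
rewrite ffunE PoszD !PoszM mulrDl !mulrA //.
Qed.

Lemma rhs_comb j p n : rhs (comb j p n) =
  (`|frow n j|%N)%:R * rhs p + (`|frow p j|%N)%:R * rhs n.
Proof.
rewrite /rhs !mulr_sumr -big_split /=; apply: eq_bigr => i _.
rewrite ffunE natrD !natrM mulrDl !mulrA //.
Qed.

Lemma lhs_comb y j p n : lhs y (comb j p n) =
  (`|frow n j|%N)%:R * lhs y p + (`|frow p j|%N)%:R * lhs y n.
Proof.
rewrite /lhs !mulr_sumr -big_split /=; apply: eq_bigr => v _.
rewrite row_comb intrD !intrM mulrDl !mulrA //.
Qed.

Definition upd (y : V -> F) j t := fun v => if v == j then t else y v.

Definition rest (y : V -> F) j c := \sum_(v | v != j) (frow c v)%:~R * y v.

Lemma lhs_split y j c : lhs y c = (frow c j)%:~R * y j + rest y j c.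
Proof. by rewrite /lhs (bigD1 j). Qed.

Lemma rest_upd y j t c : rest (upd y j t) j c = rest y j c.
Proof. by apply: eq_bigr => v /negbTE vj; rewrite /upd vj. Qed.

Lemma upd_j y j t : upd y j t j = t.
Proof. by rewrite /upd eqxx. Qed.

Lemma between (lo hi : seq F) :
  (forall l h, l \in lo -> h \in hi -> l <= h) ->
  exists t, (forall l, l \in lo -> l <= t) /\ (forall h, h \in hi -> t <= h).
Proof.
elim: lo => [|l lo IH] H.
  elim: hi {H} => [|h hi [t [_ Ht]]]; first by exists 0.
  exists (Num.min h t); split => // h'; rewrite inE => /orP [/eqP->|hh].
    by rewrite ge_min lexx.
  by rewrite ge_min (Ht _ hh) orbT.
have [t [Hl Hh]] : exists t, (forall l, l \in lo -> l <= t) /\ (forall h, h \in hi -> t <= h).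
  by apply: IH => l' h lh hh; apply: H => //; rewrite inE lh orbT.
exists (Num.max l t); split.
  move=> l'; rewrite inE => /orP [/eqP->|ll]; first by rewrite le_max lexx.
  by rewrite le_max (Hl _ ll) orbT.
move=> h hh; rewrite ge_max (Hh _ hh) andbT; apply: H => //; rewrite inE eqxx.
by [].
Qed.

Lemma backstep j L y : (forall c, c \in fmelim j L -> sat y c) ->
  exists t, forall c, c \in L -> sat (upd y j t) c.
Proof.
move=> Hs.
pose g c := (rhs c - rest y j c) / (frow c j)%:~R.
have gE c : frow c j != 0 -> (frow c j)%:~R * g c = rhs c - rest y j c.
  by move=> nz; rewrite /g mulrC divfK // intr_eq0.
have [|t [Hl Hh]] := @between [seq g c | c <- L & frow c j < 0]
                            [seq g c | c <- L & 0 < frow c j].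
  move=> l h /mapP [n]; rewrite mem_filter => /andP [nneg nL] ->.
  move=> /mapP [p]; rewrite mem_filter => /andP [ppos pL] ->.
  have : sat y (comb j p n).
    apply: Hs; rewrite mem_cat; apply/orP; right.
    by apply/allpairsP; exists (p, n); rewrite /= !mem_filter ppos nneg pL nL.
  rewrite /sat lhs_comb rhs_comb !(lhs_split _ j).
  have -> : (`|frow n j|%N)%:R = (- frow n j)%:~R :> F.
    by rewrite -(ltz0_abs nneg) pmulrn.
  have -> : (`|frow p j|%N)%:R = (frow p j)%:~R :> F.
    by rewrite -{2}(gtz0_abs ppos) pmulrn.
  have En := gE n (ltr0_neq0 nneg); have Ep := gE p (lt0r_neq0 ppos).
  have rn : (frow n j)%:~R < 0 :> F by rewrite ltrz0.
  have rp : 0 < (frow p j)%:~R :> F by rewrite ltr0z.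
  rewrite intrN => H.
  have H2 : 0 <= (- (frow n j)%:~R) * ((frow p j)%:~R * g p) + (frow p j)%:~R * ((frow n j)%:~R * g n).
    rewrite Ep En; lra.
  have H3 : 0 <= ((- (frow n j)%:~R) * (frow p j)%:~R) * (g p - g n) by lra.
  rewrite pmulr_rge0 in H3; last by nra.
  lra.
exists t => c cL; rewrite /sat (lhs_split _ j) rest_upd upd_j.
case: (ltrgtP (frow c j) 0) => hc.
- have := Hl (g c); rewrite map_f ?mem_filter ?hc // => /(_ isT) gt.
  rewrite -(subrK (rest y j c) (rhs c)) lerD2r -gE ?ltr0_neq0 //.
  by rewrite ler_nM2l // ltrz0.
- have := Hh (g c); rewrite map_f ?mem_filter ?hc // => /(_ isT) gt.
  rewrite -(subrK (rest y j c) (rhs c)) lerD2r -gE ?lt0r_neq0 //.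
  by rewrite ler_pM2l // ltr0z.
- have : sat y c by apply: Hs; rewrite mem_cat mem_filter hc eqxx cL.
  by rewrite /sat (lhs_split _ j) hc !mul0r.
Qed.


Definition elims (s : seq V) L := foldr fmelim L s.

Lemma back_all s L : (exists y, forall c, c \in elims s L -> sat y c) ->
  exists y, forall c, c \in L -> sat y c.
Proof.
elim: s => [|j s IH] //= [y Hy]; apply: IH.
have [t Ht] := backstep Hy; by exists (upd y j t).
Qed.

Lemma fmelim_row0 j L c : c \in fmelim j L -> frow c j = 0.
Proof.
rewrite mem_cat => /orP [|/allpairsP [[p n] [/=]]].
  by rewrite mem_filter => /andP [/eqP].
rewrite !mem_filter => /andP [pp _] /andP [nn _] ->.
rewrite row_comb (ltz0_abs nn) (gtz0_abs pp); ring.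
Qed.

Lemma elim_keep0 j L v : (forall c, c \in L -> frow c v = 0) ->
  forall c, c \in fmelim j L -> frow c v = 0.
Proof.
move=> H c; rewrite mem_cat => /orP [|/allpairsP [[p n] [/=]]].
  by rewrite mem_filter => /andP [_ /H].
rewrite !mem_filter => /andP [_ /H pv] /andP [_ /H nv] ->.
by rewrite row_comb pv nv !mulr0 addr0.
Qed.

Lemma elims_row0 s L c v : c \in elims s L -> v \in s -> frow c v = 0.
Proof.
elim: s c => [|j s IH] c //=; rewrite inE => cin /orP [/eqP ->|vs].
  exact: fmelim_row0 cin.
by apply: elim_keep0 cin => c' c'in; apply: IH.
Qed.

Definition bndP (r m : nat) (L : seq {ffun I -> nat}) :=
  forall c, c \in L -> (forall v, `|frow c v| <= r)%N /\ (\sum_i c i <= m)%N.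

Lemma elim_bound j L r m : (0 < r)%N -> bndP r m L -> bndP (2 * r * r) (2 * r * m) (fmelim j L).
Proof.
move=> r0 H c; rewrite mem_cat => /orP [|/allpairsP [[p n] [/=]]].
  rewrite mem_filter => /andP [_ /H [H1 H2]]; split.
    by move=> v; apply: leq_trans (H1 v) _; nia.
  by apply: leq_trans H2 _; nia.
rewrite !mem_filter => /andP [_ /H [Hp1 Hp2]] /andP [_ /H [Hn1 Hn2]] ->; split.
  move=> v; rewrite row_comb.
  set x := (_ * frow p v)%R; set z := (_ * frow n v)%R.
  have : (`|(x + z)%R| <= `|x| + `|z|)%N by lia.
  rewrite /x /z !abszM /= => h; apply: leq_trans h _.
  have := Hp1 v; have := Hn1 v; have := Hp1 j; have := Hn1 j; nia.
rewrite /comb.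
have -> : (\sum_i [ffun i => `|frow n j| * p i + `|frow p j| * n i]%N i =
           `|frow n j| * \sum_i p i + `|frow p j| * \sum_i n i)%N.
  rewrite !big_distrr -big_split /=; apply: eq_bigr => i _; by rewrite ffunE.
have := Hp1 j; have := Hn1 j; nia.
Qed.

Fixpoint bR k := match k with 0 => 1%N | k.+1 => (2 * bR k * bR k)%N end.
Fixpoint bM k := match k with 0 => 1%N | k.+1 => (2 * bR k * bM k)%N end.

Lemma bR_pos k : (0 < bR k)%N.
Proof. elim: k => //= k IH; nia. Qed.

Lemma elims_bound s L : bndP 1 1 L -> bndP (bR (size s)) (bM (size s)) (elims s L).
Proof.
move=> H; elim: s => //= j s IH; apply: elim_bound => //; exact: bR_pos.
Qed.

Definition unitc (i0 : I) : {ffun I -> nat} := [ffun i => (i == i0 : nat)].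
Definition L0 := [seq unitc i0 | i0 <- enum I].

Lemma row_unit i0 v : frow (unitc i0) v = a i0 v.
Proof.
rewrite /frow (bigD1 i0) //= big1 ?addr0; first by rewrite ffunE eqxx mul1r.
by move=> i /negbTE ne; rewrite ffunE ne mul0r.
Qed.

Lemma rhs_unit i0 : rhs (unitc i0) = b i0.
Proof.
rewrite /rhs (bigD1 i0) //= big1 ?addr0; first by rewrite ffunE eqxx mul1r.
by move=> i /negbTE ne; rewrite ffunE ne mul0r.
Qed.

Lemma sum_unit i0 : (\sum_i unitc i0 i = 1)%N.
Proof.
rewrite (bigD1 i0) //= big1 ?addn0; first by rewrite ffunE eqxx.
by move=> i /negbTE ne; rewrite ffunE ne.
Qed.

Theorem FM_main : (forall i v, (`|a i v| <= 1)%N) ->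
  (exists y : V -> F, forall i, \sum_v (a i v)%:~R * y v <= b i) \/
  (exists c : {ffun I -> nat}, (forall v, frow c v = 0) /\ rhs c < 0 /\
      (\sum_i c i <= bM #|V|)%N).
Proof.
move=> Ha.
have B0 : bndP 1 1 L0.
  move=> c /mapP [i0 _ ->]; split; last by rewrite sum_unit.
  by move=> v; rewrite row_unit.
have := elims_bound (s:=enum V) B0; rewrite -cardE => Bnd.
case: (boolP (all (fun c => 0 <= rhs c) (elims (enum V) L0))) => [/allP Hall|].
  left.
  have [y Hy] : exists y, forall c, c \in L0 -> sat y c.
    apply: (@back_all (enum V)); exists (fun _ => 0) => c cin.
    rewrite /sat /lhs big1 ?Hall // => v _; by rewrite mulr0.
  exists y => i; have := Hy (unitc i); rewrite map_f ?mem_enum // => /(_ isT).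
  by rewrite /sat /lhs rhs_unit; under eq_bigr do rewrite row_unit.
move=> /allPn [c cin]; rewrite -ltNge => neg.
right; exists c; split; last by split => //; case: (Bnd c cin).
move=> v; apply: (elims_row0 cin); by rewrite mem_enum.
Qed.

End FM.
Section Alg.
Variables (T : finType) (Sig : {set {set T}}) (HA : is_algebra Sig).

Lemma alg0 : set0 \in Sig. Proof. by case: HA. Qed.
Lemma algC A : A \in Sig -> ~: A \in Sig. Proof. by case: HA => _ h _; apply: h. Qed.
Lemma algU A B : A \in Sig -> B \in Sig -> A :|: B \in Sig.
Proof. by case: HA => _ _ h; apply: h. Qed.
Lemma algT : [set: T] \in Sig. Proof. by rewrite -setC0; apply/algC/alg0. Qed.
Lemma algI A B : A \in Sig -> B \in Sig -> A :&: B \in Sig.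
Proof.
by move=> hA hB; rewrite -[A :&: B]setCK setCI; apply/algC/algU; apply: algC.
Qed.
Lemma algD A B : A \in Sig -> B \in Sig -> A :\: B \in Sig.
Proof. by move=> hA hB; rewrite setDE; apply: algI => //; apply: algC. Qed.

Definition atom x := \bigcap_(S in Sig | x \in S) S.

Lemma atom_in x : atom x \in Sig.
Proof.
rewrite /atom; apply: (big_ind (fun X => X \in Sig)).
- exact: algT.
- by move=> ? ?; apply: algI.
- by move=> S /andP [].
Qed.

Lemma mem_atom x : x \in atom x.
Proof. by apply/bigcapP => S /andP []. Qed.

Lemma atom_sub x S : S \in Sig -> x \in S -> atom x \subset S.
Proof. move=> hS xS; apply: bigcap_inf; by rewrite hS. Qed.

Lemma atom_eq x y : y \in atom x -> atom y = atom x.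
Proof.
move=> yx; apply/eqP; rewrite eqEsubset; apply/andP; split.
  by apply: atom_sub => //; apply: atom_in.
case: (boolP (x \in atom y)) => [xy|nxy]; first by apply: atom_sub => //; apply: atom_in.
have : atom x \subset ~: atom y by apply: atom_sub; [apply/algC/atom_in|rewrite inE].
by move/subsetP/(_ y yx); rewrite inE mem_atom.
Qed.

Variable mu : {set T} -> R.
Hypothesis Hmu : prob_measure Sig mu.

Lemma mu_ge0 A : A \in Sig -> 0 <= mu A.
Proof. by case: Hmu => h _ _ _ /h /andP []. Qed.
Lemma mu_add A B : A \in Sig -> B \in Sig -> [disjoint A & B] -> mu (A :|: B) = mu A + mu B.
Proof. by case: Hmu => _ _ _ h; apply: h. Qed.

Definition wt x := mu (atom x) / (#|atom x|)%:R.

Lemma wt_ge0 x : 0 <= wt x.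
Proof. by rewrite /wt divr_ge0 ?ler0n // mu_ge0 // atom_in. Qed.

Lemma mu_sum S : S \in Sig -> mu S = \sum_(x in S) wt x.
Proof.
move: {2}#|S| (leqnn #|S|) => n; elim: n S => [|n IH] S.
  rewrite leqn0 cards_eq0 => /eqP -> _; rewrite big_set0; by case: Hmu.
move=> hn hS; case: (set_0Vmem S) => [->|[x xS]].
  rewrite big_set0; by case: Hmu.
have sub := atom_sub hS xS.
have -> : S = atom x :|: (S :\: atom x).
  by apply/setP => y; rewrite !inE; case: (boolP (y \in atom x)) => // /(subsetP sub) ->.
rewrite mu_add ?atom_in ?algD ?atom_in //; last first.
  by rewrite -setI_eq0 setDE setIA (setIC (atom x)) -setIA setICr setI0.
rewrite (big_setID (atom x)) /=.
have -> : (atom x :|: S :\: atom x) :&: atom x = atom x.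
  by apply/setP => y; rewrite !inE; case: (y \in atom x); case: (y \in S).
have -> : (atom x :|: S :\: atom x) :\: atom x = S :\: atom x.
  by apply/setP => y; rewrite !inE; case: (y \in atom x); case: (y \in S).
congr (_ + _); last first.
  apply: IH; last by apply: algD => //; apply: atom_in.
  have lt : (#|S :\: atom x| < #|S|)%N.
    apply: proper_card; apply/properP; split; first exact: subsetDl.
    by exists x => //; rewrite inE mem_atom.
  by rewrite -ltnS; apply: leq_trans hn.
rewrite (eq_bigr (fun _ => wt x)); last by move=> y /atom_eq; rewrite /wt => ->.
rewrite sumr_const -mulr_natr /wt divfK // pnatr_eq0 -lt0n card_gt0.
by apply/set0Pn; exists x; apply: mem_atom.
Qed.


Lemma pm_cover (m n k : nat) A (As : 'I_m -> {set T}) :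
  A \in Sig -> (forall i, As i \in Sig) -> nk_cover As n k A ->
  k%:R + n%:R * mu A <= \sum_i mu (As i).
Proof.
move=> hA hAs [cT cA].
rewrite (eq_bigr (fun i => \sum_(x in As i) wt x)); last by move=> i _; apply: mu_sum.
have -> : \sum_i \sum_(x in As i) wt x = \sum_x (#|[set i | x \in As i]|)%:R * wt x.
  under eq_bigr do rewrite big_mkcond /=.
  rewrite exchange_big /=; apply: eq_bigr => x _.
  rewrite -big_mkcond /=; rewrite (eq_bigl (mem [set i | x \in As i])).
  2: by move=> i; rewrite /= in_set.
  by rewrite sumr_const mulr_natl.
have E1 : \sum_x wt x = 1.
  have <- : \sum_(x in [set: T]) wt x = \sum_x wt x by apply: eq_bigl => x; rewrite inE.
  by rewrite -mu_sum ?algT //; case: Hmu.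
have -> : k%:R + n%:R * mu A =
    \sum_x (k%:R * wt x + (if x \in A then n%:R * wt x else 0)).
  rewrite big_split /= -mulr_sumr E1 mulr1 -big_mkcond /= -mulr_sumr -mu_sum //.
apply: ler_sum => x _.
have hc : (k + n * (x \in A) <= #|[set i | x \in As i]|)%N.
  case: (boolP (x \in A)) => xA.
    by rewrite muln1 addnC; apply: cA.
  by rewrite muln0 addn0; apply: cT.
have hw := wt_ge0 x.
have hc' : (k + n * (x \in A))%:R <= (#|[set i | x \in As i]|)%:R :> R by rewrite ler_nat.
case: (x \in A) hc' => /= hc'.
  by rewrite muln1 natrD in hc'; rewrite -mulrDl ler_wpM2r.
by rewrite muln0 addn0 in hc'; rewrite addr0 ler_wpM2r.
Qed.

End Alg.

Section Main.
Variables (T : finType) (Sig : {set {set T}}) (ups : {set T} -> R).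
Hypothesis HA : is_algebra Sig.

Lemma fwd (B : nat -> nat) (P : ({set T} -> R) -> Prop) :
  (forall mu, P mu -> prob_measure Sig mu) ->
  (forall X, X \in Sig -> is_sup_of P X (ups X)) -> UPF Sig ups B.
Proof.
move=> HP Hs.
have [mu0 P0] : exists mu, P mu.
  case: (classic (exists mu, P mu)) => // H; exfalso.
  have [_ h] := Hs _ (alg0 HA).
  have := h (ups set0 - 1) (fun mu Pm => False_ind _ (H (ex_intro _ mu Pm))); lra.
have Hc : forall X v, X \in Sig -> (forall mu, P mu -> mu X = v) -> ups X = v.
  move=> X v hX Hv; have [h1 h2] := Hs _ hX.
  have := h1 _ P0; rewrite Hv // => e1.
  have := h2 v (fun mu Pm => ltac:(by rewrite (Hv mu Pm))) ; lra.
split.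
- by apply: Hc (alg0 HA) _ => mu /HP [].
- by apply: Hc (algT HA) _ => mu /HP [].
move=> m n k _ _ _ A As hA hAs cov.
set S := \sum_i ups (As i).
have key : forall mu, P mu -> k%:R + n%:R * mu A <= S.
  move=> mu Pm; apply: le_trans (pm_cover HA (HP _ Pm) hA hAs cov) _.
  apply: ler_sum => i _; have [h _] := Hs _ (hAs i); exact: h.
case: (posnP n) => [n0|n0].
  have := key _ P0; rewrite n0 !mulr0n !mul0r; lra.
set q := (S - k%:R) / n%:R.
have nq : n%:R * q = S - k%:R by rewrite /q mulrC divfK // pnatr_eq0 -lt0n.
have np : 0 < n%:R :> R by rewrite ltr0n.
have : ups A <= q.
  have [_ h] := Hs _ hA; apply: h => mu Pm.
  rewrite -(ler_pM2l np) nq; have := key _ Pm; lra.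
rewrite -(ler_pM2l np) nq; lra.
Qed.

End Main.

Section Back.
Variables (T : finType) (Sig : {set {set T}}) (ups : {set T} -> R).
Hypothesis HA : is_algebra Sig.

Definition Idx := ({set T} + (bool + T))%type.

Definition aX (X : {set T}) (i : Idx) (v : T) : int :=
  match i with
  | inl Y => if Y \in Sig then (v \in Y)%:Z else 0
  | inr (inl true) => -1
  | inr (inl false) => - (v \in X)%:Z
  | inr (inr x0) => - (v == x0)%:Z
  end.

Definition bX (X : {set T}) (i : Idx) : R :=
  match i with
  | inl Y => if Y \in Sig then ups Y else 0
  | inr (inl true) => -1
  | inr (inl false) => - ups X
  | inr (inr x0) => 0
  end.

Lemma aX_bound X i v : (`|aX X i v| <= 1)%N.
Proof.
case: i => [Y|[[]|x0]] /=; rewrite ?abszN //.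
- by case: (Y \in Sig); case: (v \in Y).
- by case: (v \in X).
- by case: (v == x0).
Qed.

Lemma sum_ind (p : pred T) (y : T -> R) :
  \sum_v ((p v)%:Z)%:~R * y v = \sum_(v | p v) y v.
Proof.
rewrite [RHS]big_mkcond /=; apply: eq_bigr => v _; case: (p v) => /=.
  by rewrite mul1r. by rewrite mul0r.
Qed.

Lemma sum_indN (p : pred T) (y : T -> R) :
  \sum_v ((- (p v)%:Z)%:~R) * y v = - \sum_(v | p v) y v.
Proof.
rewrite -sum_ind -sumrN; apply: eq_bigr => v _; by rewrite intrN mulNr.
Qed.


Lemma card_nth_count (Z : Type) (s : seq Z) (x0 : Z) (p : pred Z) :
  #|[set i : 'I_(size s) | p (nth x0 s i)]| = count p s.
Proof.
rewrite -sum1dep_card -sum1_count (big_nth x0) big_mkord //.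
Qed.

Variable X : {set T}.
Variable c : {ffun Idx -> nat}.

Definition cnt v := (\sum_(Y in Sig) c (inl Y) * (v \in Y))%N.

Lemma row_dec v : frow (aX X) c v =
  (cnt v)%:Z - (c (inr (inl true)))%:Z - (c (inr (inl false)) * (v \in X))%N%:Z
  - (c (inr (inr v)))%:Z.
Proof.
rewrite /frow big_sumType /= big_sumType /= big_bool /=.
have -> : \sum_i (c (inr (inr i)))%:Z * - (v == i)%:Z = - (c (inr (inr v)))%:Z.
  rewrite (bigD1 v) //= eqxx big1 ?addr0; first by rewrite mulrN1.
  by move=> i /negbTE; rewrite eq_sym => ->; rewrite mulr0.
have -> : \sum_i (c (inl i))%:Z * (if i \in Sig then (v \in i)%:Z else 0) = (cnt v)%:Z.
  rewrite /cnt -natz natr_sum [RHS]big_mkcond /=; apply: eq_bigr => Y _.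
  case: (Y \in Sig); rewrite ?mulr0 // natrM natz; by case: (v \in Y).
rewrite PoszM mulrN1 mulrN; ring.
Qed.

Lemma rhs_dec : rhs (bX X) c =
  \sum_(Y in Sig) (c (inl Y))%:R * ups Y - (c (inr (inl true)))%:R
  - (c (inr (inl false)))%:R * ups X.
Proof.
rewrite /rhs big_sumType /= big_sumType /= big_bool /=.
have -> : \sum_i (c (inr (inr i)))%:R * (0 : R) = 0 by apply: big1 => i _; rewrite mulr0.
rewrite [X in X - _ - _]big_mkcond /=.
have -> : \sum_i (c (inl i))%:R * (if i \in Sig then ups i else 0) =
          \sum_i (if i \in Sig then (c (inl i))%:R * ups i else 0).
  by apply: eq_bigr => Y _; case: (Y \in Sig); rewrite ?mulr0.
rewrite mulrN1 mulrN; lra.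
Qed.

Lemma sum_dec : (\sum_i c i = \sum_Y c (inl Y) +
   (c (inr (inl true)) + c (inr (inl false)) + \sum_x c (inr (inr x))))%N.
Proof. by rewrite big_sumType /= big_sumType /= big_bool. Qed.

End Back.

Section Final.
Variables (T : finType) (Sig : {set {set T}}) (ups : {set T} -> R).
Hypothesis HA : is_algebra Sig.

Lemma no_cert X (c : {ffun Idx T -> nat}) : X \in Sig -> UPF Sig ups bM ->
  (forall v, frow (aX Sig X) c v = 0) -> rhs (bX Sig ups X) c < 0 ->
  (\sum_i c i <= bM #|T|)%N -> False.
Proof.
move=> hX [_ _ U3] hrow hrhs hsum.
set s := flatten [seq nseq (c (inl Y)) Y | Y <- enum Sig].
set As := fun i : 'I_(size s) => nth set0 s i.
have hcnt : forall v, #|[set i | v \in As i]| = cnt Sig c v.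
  move=> v; rewrite /As (card_nth_count s set0 (fun Y => v \in Y)) count_flatten sumnE.
  rewrite big_map /cnt -big_enum big_map /=; apply: eq_bigr => Y _.
  by rewrite count_nseq mulnC.
have hsz : size s = (\sum_(Y in Sig) c (inl Y))%N.
  by rewrite size_flatten sumnE /shape -map_comp big_map -big_enum /=; apply: eq_bigr => Y _; rewrite /= size_nseq.
have hups : \sum_i ups (As i) = \sum_(Y in Sig) (c (inl Y))%:R * ups Y.
  rewrite /As -(big_mkord xpredT (fun i => ups (nth set0 s i))) -(big_nth set0 xpredT ups).
  rewrite big_flatten big_map -big_enum /=; apply: eq_bigr => Y _.
  by rewrite big_nseq iter_addr_0 mulr_natl.
have hin : forall i, As i \in Sig.
  move=> i; have : As i \in s by rewrite /As mem_nth.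
  move=> /flattenP [r /mapP [Y]]; rewrite mem_enum => hY -> ; rewrite mem_nseq => /andP [_ /eqP ->].
  exact: hY.
have hsub : (\sum_(Y in Sig) c (inl Y) <= \sum_Y c (inl Y))%N.
  rewrite [X in (_ <= X)%N](bigID (fun Y => Y \in Sig)) /=; exact: leq_addr.
have := sum_dec c; move=> hdec.
have hk : (c (inr (inl true)) <= bM #|T|)%N by lia.
have hn : (c (inr (inl false)) <= bM #|T|)%N by lia.
have hm : (size s <= bM #|T|)%N by lia.
have cov : nk_cover As (c (inr (inl false))) (c (inr (inl true))) X.
  split => v vX; rewrite hcnt; have := hrow v; rewrite row_dec => h.
    lia.
  rewrite vX in h; lia.
have := U3 _ _ _ hm hn hk X As hX hin cov.
rewrite hups; have := hrhs; rewrite rhs_dec; lra.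
Qed.


Lemma feas X : X \in Sig -> UPF Sig ups bM ->
  exists y : T -> R, [/\ (forall v, 0 <= y v), \sum_v y v = 1,
    (forall Y, Y \in Sig -> \sum_(v in Y) y v <= ups Y) &
    ups X <= \sum_(v in X) y v].
Proof.
move=> hX U.
case: (@FM_main R _ _ _ (bX Sig ups X) (@aX_bound T Sig X)) => [[y Hy]|[c [h1 [h2 h3]]]];
  last by exfalso; apply: (no_cert hX U h1 h2 h3).
have hY : forall Y, Y \in Sig -> \sum_(v in Y) y v <= ups Y.
  move=> Y hY; have := Hy (inl Y); rewrite /= hY.
  by rewrite (sum_ind (fun v => v \in Y)).
case: U => _ U2 _.
exists y; split => //.
- move=> x0; have := Hy (inr (inr x0)); rewrite /= (sum_indN (fun v => v == x0)) big_pred1_eq.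
  lra.
- have := Hy (inr (inl true)); rewrite /=.
  have -> : \sum_v ((-1 : int)%:~R) * y v = - \sum_v y v.
    by rewrite -sumrN; apply: eq_bigr => v _; rewrite mulN1r.
  have := hY _ (algT HA); rewrite U2.
  have -> : \sum_(v in [set: T]) y v = \sum_v y v by apply: eq_bigl => v; rewrite inE.
  lra.
- have := Hy (inr (inl false)); rewrite /= (sum_indN (fun v => v \in X)); lra.
Qed.

End Final.

Theorem theorem2 :
  exists B : nat -> nat,
    forall (T : finType) (Sig : {set {set T}}) (ups : {set T} -> R),
      is_algebra Sig ->
      ((exists P : ({set T} -> R) -> Prop,
          (forall mu, P mu -> prob_measure Sig mu) /\
          (forall X, X \in Sig -> is_sup_of P X (ups X)))
       <-> UPF Sig ups B).
Proof.
exists bM => T Sig ups HA; split.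
  by move=> [P [HP Hs]]; apply: (fwd HA bM HP Hs).
move=> U.
exists (fun mu => exists y : T -> R, [/\ (forall v, 0 <= y v), \sum_v y v = 1,
    (forall Y, Y \in Sig -> mu Y <= ups Y) & mu = fun Y => \sum_(v in Y) y v]).
split.
  move=> mu [y [h0 h1 h2 ->]]; split.
  - move=> A _; apply/andP; split; first by apply: sumr_ge0 => v _; apply: h0.
    rewrite -h1 [X in _ <= X](bigID (mem A)) /= lerDl sumr_ge0 // => v _; exact: h0.
  - by rewrite big_set0.
  - by rewrite -h1; apply: eq_bigl => v; rewrite inE.
  - move=> A B _ _ dis.
    rewrite (eq_bigl [predU A & B]); first by rewrite bigU.
    by move=> v; rewrite !inE.
move=> X hX; split.
  by move=> mu [y [_ _ h2 _]]; apply: h2.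
move=> bb Hb.
have [y [h0 h1 h2 h3]] := feas HA hX U.
apply: le_trans h3 _; apply: (Hb (fun Y => \sum_(v in Y) y v)).
exists y; split => //.
Qed.
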